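(* Let $k$ be a field, $A=kQ_A/I_A$ an indecomposable radical square zero algebra, and $B$ the algebra obtained from $A$ by gluing a source vertex and a sink vertex of $Q_A$. Then for every $n\ge2$ the map $\psi_n$ restricts to an injective map $\mathrm{Ker}(\delta^n_A)\hookrightarrow\mathrm{Ker}(\delta^n_B)$ which maps $\mathrm{Im}(\delta^{n-1}_A)$ into $\mathrm{Im}(\delta^{n-1}_B)$. In addition, $\dim_k\mathrm{HH}^n(B)-\dim_k\mathrm{HH}^n(A)\ge0$.
   Context: A radical square zero algebra is $kQ/I$ with $Q$ a finite quiver and $I$ generated by all paths of length 2; indecomposable means $Q$ connected. Gluing a source $e_1$ (no incoming arrows) and a sink $e_m$ (no outgoing arrows), both non-isolated: $B$ is the subalgebra generated by $e_1+e_m$, the other vertex idempotents and all arrows; $B\cong kQ_B/I_B$, $Q_B$ obtained by identifying $e_1,e_m$ into one vertex $f_1$, $I_B$ generated by all length-2 paths of $Q_B$. For a path $p=a_r\cdots a_1$ of $Q_A$, $p^*=a_r^*\cdots a_1^*$ is its image in $Q_B$, and vertices map to their images. $Q_n$ denotes the set of paths of length $n$; for path sets $X,Y$, $k(X\|Y)$ is the vector space with basis the pairs $x\|y$, $x\in X$, $y\in Y$, with the same source and same target. Cibils' complex for a radical square zero algebra $kQ/I$: $C^n=k(Q_n\|Q_0)\oplus k(Q_n\|Q_1)$ and $\delta^n:C^n\to C^{n+1}$, $\delta^n(x,y)=(0,D_n(x))$, where $D_n(\gamma\|e)=\sum_{a\in Q_1,\,s(a)=e}a\gamma\|a+(-1)^{n+1}\sum_{b\in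 Q_1,\,t(b)=e}\gamma b\|b$; its cohomology in degree $n\ge1$ is $\mathrm{HH}^n=\mathrm{Ker}\,\delta^n/\mathrm{Im}\,\delta^{n-1}$. $\delta^n_A,\delta^n_B$ denote these for $A,B$. $\psi_n:C^n_A\to C^n_B$ is the linear map $\gamma\|x\mapsto\gamma^*\|x^*$ for $\gamma\in(Q_A)_n$, $x\in(Q_A)_0\cup(Q_A)_1$. *)

(* Defs.v *)
From HB Require Import structures.
From mathcomp Require Import all_boot all_order all_algebra.
Set Implicit Arguments. Unset Strict Implicit. Unset Printing Implicit Defensive.
Import GRing.Theory.
Local Open Scope ring_scope.

Record quiver := Quiver {
  qV : finType; qE : finType; qs : qE -> qV; qt : qE -> qV }.

Section Quiver.
Variable Q : quiver.

(* A path of length n is encoded by its source vertex v together with the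
   sequence of its arrows [a_1; ...; a_n] in order of traversal, i.e. the
   path a_n ... a_1 (composition written right to left, as in the paper).
   For n = 0 this is the trivial path at v. *)
Fixpoint walk (v : qV Q) (l : seq (qE Q)) : bool :=
  if l is a :: l' then (qs a == v) && walk (qt a) l' else true.

Definition qpath (n : nat) := {x : qV Q * n.-tuple (qE Q) | walk x.1 x.2}.

Definition psrc n (p : qpath n) : qV Q := (val p).1.
Definition pseq n (p : qpath n) : seq (qE Q) := val (val p).2.
Definition ptgt n (p : qpath n) : qV Q := last (psrc p) (map (@qt Q) (pseq p)).

Definition xsrc (x : qV Q + qE Q) : qV Q :=
  match x with inl v => v | inr a => qs a end.
Definition xtgt (x : qV Q + qE Q) : qV Q :=
  match x with inl v => v | inr a => qt a end.

(* basis of k(Q_n || Q_0) (+) k(Q_n || Q_1): parallel pairs gamma || x *)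
Definition ppair (n : nat) :=
  {y : qpath n * (qV Q + qE Q) | (psrc y.1 == xsrc y.2) && (ptgt y.1 == xtgt y.2)}.

Definition pp_path n (b : ppair n) : qpath n := (val b).1.
Definition pp_x n (b : ppair n) : qV Q + qE Q := (val b).2.

Variable K : fieldType.

(* Cibils' cochain space C^n = k(Q_n||Q_0) (+) k(Q_n||Q_1), as functions
   on the basis of parallel pairs (coefficient vectors). *)
Definition cochain (n : nat) := {ffun ppair n -> K^o}.

(* Coefficient of the basis vector p || c (p of length n+1, c an arrow)
   in D_n(gamma || e) =
     sum_{a, s(a)=e} a gamma || a + (-1)^(n+1) sum_{b, t(b)=e} gamma b || b. *)
Definition Dcoef n (gamma : qpath n) (e : qV Q) (p : qpath n.+1) (c : qE Q) : K :=
  ((qs c == e) && (psrc p == psrc gamma) && (pseq p == rcons (pseq gamma) c))%:R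
  + (-1) ^+ n.+1 *
    ((qt c == e) && (psrc p == qs c) && (pseq p == c :: pseq gamma))%:R.

(* delta^n (x, y) = (0, D_n(x)), extended linearly. *)
Definition cdelta n (f : cochain n) : cochain n.+1 :=
  [ffun b' : ppair n.+1 =>
     (match pp_x b' with
     | inl _ => 0
     | inr c => \sum_(b : ppair n)
                  match pp_x b with
                  | inl e => (f b : K) * Dcoef (pp_path b) e (pp_path b') c
                  | inr _ => 0
                  end
     end : K^o)].

Definition kerd n : {vspace cochain n} := lker (linfun (@cdelta n)).

(* Im delta^{n-1} as a subspace of C^n (taken to be 0 for n = 0). *)
Definition imd n : {vspace cochain n} :=
  match n return {vspace cochain n} with
  | 0 => 0%VS
  | m.+1 => limg (linfun (@cdelta m))
  end.

(* dim_k HH^n = dim_k (Ker delta^n / Im delta^(n-1))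
             = dim Ker delta^n - dim Im delta^(n-1)   (Im is contained in Ker) *)
Definition HHdim n : nat := (\dim (kerd n) - \dim (imd n))%N.

End Quiver.

Definition is_source (Q : quiver) (v : qV Q) := forall a : qE Q, qt a != v.
Definition is_sink (Q : quiver) (v : qV Q) := forall a : qE Q, qs a != v.
Definition non_isolated (Q : quiver) (v : qV Q) :=
  exists a : qE Q, (qs a == v) || (qt a == v).
Definition qadj (Q : quiver) : rel (qV Q) :=
  fun x y => [exists a : qE Q, ((qs a == x) && (qt a == y)) || ((qs a == y) && (qt a == x))].
Definition connected_quiver (Q : quiver) := forall u v : qV Q, connect (@qadj Q) u v.

(* Gluing the vertices e1 and em: the vertex em is identified with e1.
   The vertex set of Q_B is V \ {em} (the guard "|| (e1 == em)" is only there
   so that the construction needs no proof of e1 != em; under the hypotheses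
   of the theorem e1 != em, so it reduces to v != em).  The vertex e1 of this
   set plays the role of f_1. *)
Section Glue.
Variables (Q : quiver) (e1 em : qV Q).

Definition gV := {v : qV Q | (v != em) || (e1 == em)}.

Definition glue (v : qV Q) : gV :=
  if insub v is Some w then w else Sub e1 (orNb (e1 == em)).

Definition glued_quiver : quiver :=
  @Quiver gV (qE Q) (fun a => glue (qs a)) (fun a => glue (qt a)).

Definition glue_x (x : qV Q + qE Q) : gV + qE Q :=
  match x with inl v => inl (glue v) | inr a => inr a end.

Variable K : fieldType.

(* psi_n : gamma || x |-> gamma^* || x^*, extended linearly *)
Definition psi n (f : @cochain Q K n) : @cochain glued_quiver K n :=
  [ffun b' : ppair glued_quiver n =>
     (\sum_(b : ppair Q n |
            (glue (psrc (pp_path b)) == psrc (pp_path b'))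
            && (pseq (pp_path b) == pseq (pp_path b'))
            && (glue_x (pp_x b) == pp_x b'))
        (f b : K) : K^o)].

End Glue.

(* Main.v *)
Require Import Defs.
From HB Require Import structures.
From mathcomp Require Import all_boot all_order all_algebra.
From mathcomp Require Import zify.

Module Helpers.
Set Implicit Arguments. Unset Strict Implicit. Unset Printing Implicit Defensive.
Import GRing.Theory.
Local Open Scope ring_scope.

Lemma walk_rcons (Q : quiver) (v : qV Q) l c :
  walk v (rcons l c) = walk v l && (qs c == last v (map (@qt Q) l)).
Proof. by elim: l v => [|a l IH] v /=; rewrite ?andbT // IH andbA. Qed.

Lemma walk_head (Q : quiver) (v : qV Q) a l : walk v (a :: l) -> qs a = v.
Proof. by case/andP=> /eqP. Qed.

Definition Sc (K : fieldType) (T : eqType) (m : nat) (s s' : seq T) (c : T) : K :=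
  (s' == rcons s c)%:R + (-1) ^+ m.+1 * (s' == c :: s)%:R.

Lemma Sc_neq0 (K : fieldType) (T : eqType) m (s s' : seq T) c :
  Sc K m s s' c != 0 -> (s' == rcons s c) || (s' == c :: s).
Proof. by rewrite /Sc; case: (s' == rcons s c); case: (s' == c :: s) => //=; rewrite mulr0 addr0 eqxx. Qed.

Section Gen.
Variables (Q : quiver) (K : fieldType).

Lemma pwalk m (p : qpath Q m) : walk (psrc p) (pseq p).
Proof. exact: valP p. Qed.

Lemma psize m (p : qpath Q m) : size (pseq p) = m.
Proof. exact: size_tuple. Qed.

Lemma Dcoef_S m (g : qpath Q m) e (p : qpath Q m.+1) c :
  (0 < m)%N -> psrc g = e -> ptgt g = e ->
  Dcoef K g e p c = Sc K m (pseq g) (pseq p) c.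
Proof.
move=> m0 Hs Ht; rewrite /Dcoef /Sc.
have Wg := pwalk g; have Wp := pwalk p.
case Eg: (pseq g) (psize g) Wg => [|a s] /=; first by move=> E; rewrite -E in m0.
move=> _ Wg.
congr (_ + _ * _).
  case E: (pseq p == _); rewrite ?andbF // andbT.
  rewrite (eqP E) in Wp.
  have -> : psrc p = psrc g by rewrite -(walk_head Wp) (walk_head Wg).
  rewrite eqxx andbT.
  move: Wp; rewrite -rcons_cons walk_rcons => /andP [_ /eqP ->].
  by rewrite -Ht /ptgt Eg eqxx.
case E: (pseq p == _); rewrite ?andbF // andbT.
rewrite (eqP E) /= in Wp.
move: Wp => /andP [/eqP Hp /andP [/eqP H _]].
by rewrite Hp eqxx andbT -H (walk_head Wg) Hs eqxx.
Qed.

Definition Tt m (f : cochain Q K m) (b : ppair Q m) (s : seq (qE Q)) (c : qE Q) : K :=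
  match pp_x b with inl _ => (f b : K) * Sc K m (pseq (pp_path b)) s c | inr _ => 0 end.

Lemma cdeltaE m (f : cochain Q K m) (b' : ppair Q m.+1) : (0 < m)%N ->
  cdelta f b' = match pp_x b' with inl _ => 0
                | inr c => \sum_b Tt f b (pseq (pp_path b')) c end.
Proof.
move=> m0; rewrite ffunE; case: (pp_x b') => // c.
apply: eq_bigr => -[[g x] H] _; rewrite /Tt /pp_x /pp_path /=.
case: x H => // e H; have /andP [/eqP H1 /eqP H2] := H.
by rewrite Dcoef_S.
Qed.

Lemma cdelta_lin m : linear (@cdelta Q K m).
Proof.
move=> a u v; apply/ffunP => b'; rewrite !ffunE.
case: (pp_x b') => [_|c].
  by rewrite scaler0; exact/esym/addr0.
rewrite scaler_sumr -big_split; apply: eq_bigr => b _.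
case: (pp_x b) => [e|_]; last by rewrite scaler0; exact/esym/addr0.
by rewrite !ffunE mulrDl scalerAl.
Qed.

Lemma cdelta2 m (g : cochain Q K m) : cdelta (cdelta g) = 0.
Proof.
apply/ffunP => b; rewrite !ffunE; case: (pp_x b) => // c.
apply: big1 => b0 _; rewrite ffunE; case: (pp_x b0) => // e.
by rewrite mul0r.
Qed.
End Gen.

HB.instance Definition _ (Q : quiver) (K : fieldType) m :=
  GRing.isLinear.Build K (cochain Q K m) (cochain Q K m.+1) _ (@cdelta Q K m) (@cdelta_lin Q K m).


Section Gl.
Variables (Q : quiver) (e1 em : qV Q) (K : fieldType).
Local Notation B := (glued_quiver e1 em).
Local Notation gl := (glue e1 em).

Lemma glueE v : val (gl v) = if v == em then e1 else v.
Proof.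
rewrite /glue; case: insubP => [w Hw Ew|].
  by rewrite Ew; case: eqP Hw => // -> /= /eqP.
by rewrite negb_or negbK => /andP [/eqP -> _]; rewrite eqxx SubK.
Qed.

Lemma glue_inj_nem u v : u != em -> v != em -> gl u = gl v -> u = v.
Proof. by move=> /negbTE Hu /negbTE Hv /(congr1 val); rewrite !glueE Hu Hv. Qed.

Lemma glue_inj_ne1 u v : u != e1 -> v != e1 -> gl u = gl v -> u = v.
Proof.
move=> Hu Hv /(congr1 val); rewrite !glueE.
by case: eqP => Eu; case: eqP => Ev // E; [rewrite Eu Ev | rewrite E eqxx in Hv | rewrite -E eqxx in Hu].
Qed.

Lemma walk_glue (v : qV Q) l : walk v l -> walk (gl v : qV B) l.
Proof.
elim: l v => [|a l IH] v //= /andP [/eqP -> W].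
by rewrite eqxx /=; apply: IH.
Qed.

Lemma last_glue (v : qV Q) (l : seq (qE Q)) :
  last (gl v) (map (@qt B) l) = gl (last v (map (@qt Q) l)).
Proof. by elim: l v => [|a l IH] v //=; rewrite -IH. Qed.

Definition glp m (p : qpath Q m) : qpath B m :=
  @exist _ _ (gl (psrc p), (val p).2) (walk_glue (valP p)).

Lemma glp_src m (p : qpath Q m) : psrc (glp p) = gl (psrc p). Proof. by []. Qed.
Lemma glp_seq m (p : qpath Q m) : pseq (glp p) = pseq p. Proof. by []. Qed.
Lemma glp_tgt m (p : qpath Q m) : ptgt (glp p) = gl (ptgt p).
Proof. exact: last_glue. Qed.

Lemma glb_proof m (b : ppair Q m) :
  (psrc (glp (pp_path b)) == @xsrc B (glue_x e1 em (pp_x b)))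
  && (ptgt (glp (pp_path b)) == @xtgt B (glue_x e1 em (pp_x b))).
Proof.
rewrite glp_src glp_tgt; case: b => [[p x] H]; have /andP [/eqP H1 /eqP H2] := H.
by rewrite /pp_x /pp_path /= H1 H2; clear; case: x => [v|a] /=; rewrite !eqxx.
Qed.

Definition glb m (b : ppair Q m) : ppair B m :=
  @exist _ _ (glp (pp_path b), glue_x e1 em (pp_x b)) (glb_proof b).

Lemma glb_x m (b : ppair Q m) : pp_x (glb b) = glue_x e1 em (pp_x b). Proof. by []. Qed.
Lemma glb_seq m (b : ppair Q m) : pseq (pp_path (glb b)) = pseq (pp_path b). Proof. by []. Qed.
Lemma glb_src m (b : ppair Q m) : psrc (pp_path (glb b)) = gl (psrc (pp_path b)). Proof. by []. Qed.

Lemma psrc_head m (p : qpath Q m) a s : pseq p = a :: s -> psrc p = qs a.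
Proof. by move=> E; have := pwalk p; rewrite E => /walk_head. Qed.

Lemma glb_inj m : (0 < m)%N -> injective (@glb m).
Proof.
move=> m0 [[p1 x1] H1] [[p2 x2] H2] E.
have Es : pseq p1 = pseq p2 by have := congr1 (fun b => pseq (pp_path b)) E.
have Ex : glue_x e1 em x1 = glue_x e1 em x2 by have := congr1 (@pp_x _ _) E.
have Ep : p1 = p2.
  case E1: (pseq p1) (psize p1) => [|a s] /=; first by move=> E0; rewrite -E0 in m0.
  move=> _; apply: val_inj; case: p1 Es E1 {H1 E} => [[v1 t1] W1]; case: p2 {H2} => [[v2 t2] W2] /= Es E1.
  have Et : t1 = t2 by apply: val_inj.
  rewrite -Et; congr pair.
  rewrite /pseq /= in Es E1; move: W1 W2; rewrite /= E1 -Es E1.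
  by move=> /walk_head <- /walk_head <-.
move: H1 H2 E; rewrite -Ep => H1 H2 E.
have Ex' : x1 = x2.
  have /andP [/eqP S1 _] := H1; have /andP [/eqP S2 _] := H2; move: S1 S2 Ex => /= S1 S2.
  case: x1 S1 {H1 E} => [v1|a1]; case: x2 S2 {H2} => [v2|a2] /= S1 S2 Ex0 //.
  - by rewrite -S1 -S2.
  - by case: Ex0 => ->.
by apply: val_inj; rewrite /= Ex'.
Qed.

End Gl.

Section Gl2.
Variables (Q : quiver) (e1 em : qV Q) (K : fieldType).
Local Notation B := (glued_quiver e1 em).
Local Notation gl := (glue e1 em).
Local Notation glb := (@glb Q e1 em _).

Lemma psi_cond m (b : ppair Q m) (b' : ppair B m) :
  ((gl (psrc (pp_path b)) == psrc (pp_path b'))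
   && (pseq (pp_path b) == pseq (pp_path b'))
   && (glue_x e1 em (pp_x b) == pp_x b')) = (glb b == b').
Proof.
apply/idP/eqP => [/andP [/andP [/eqP E1 /eqP E2] /eqP E3]|<-]; last by rewrite !eqxx.
case: b' E1 E2 E3 => [[[[v t] W] x] H] /= E1 E2 E3.
apply: val_inj => /=; congr pair; last exact: E3.
by apply: val_inj => /=; congr pair; [exact: E1 | apply: val_inj].
Qed.

Lemma psiE m (f : cochain Q K m) b' : psi e1 em f b' = \sum_(b | glb b == b') f b.
Proof. by rewrite ffunE; apply: eq_bigl => b; rewrite psi_cond. Qed.

Lemma psi_glb m (f : cochain Q K m) b : (0 < m)%N -> psi e1 em f (glb b) = f b.
Proof.
move=> m0; rewrite psiE (big_pred1 b) // => b0 /=.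
by apply/eqP/eqP => [/(glb_inj (e1:=e1) (em:=em) m0)|->].
Qed.

Lemma psi_nopre m (f : cochain Q K m) b' : (forall b, glb b != b') -> psi e1 em f b' = 0.
Proof. by move=> H; rewrite psiE big_pred0 // => b; apply/negbTE. Qed.

Definition phi m (g : cochain B K m) : cochain Q K m := [ffun b => g (glb b)].

Lemma phi_psi m (f : cochain Q K m) : (0 < m)%N -> phi (psi e1 em f) = f.
Proof. by move=> m0; apply/ffunP => b; rewrite ffunE psi_glb. Qed.

Lemma sum_glb m (F : ppair B m -> K) : (0 < m)%N ->
  (forall b', (forall b, glb b != b') -> F b' = 0) ->
  \sum_b' F b' = \sum_b F (glb b).
Proof.
move=> m0 HF; rewrite [RHS](partition_big (@Helpers.glb Q e1 em m) predT) //=.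
apply: eq_bigr => b' _; case: (pickP (fun b => glb b == b')) => [b Hb | Hn].
  have Hp : (fun i => glb i == b') =1 pred1 b.
    move=> b0 /=; apply/eqP/eqP => [E|->]; last exact/eqP.
    by apply: (glb_inj (e1:=e1) (em:=em) m0); rewrite E (eqP Hb).
  by rewrite (big_pred1 b Hp) (eqP Hb).
rewrite big_pred0 //; first by apply: HF => b; rewrite Hn.
Qed.

Lemma Tt_glb m (h : cochain B K m) b0 s c :
  Tt h (glb b0) s c = match pp_x b0 with
    inl _ => (h (glb b0) : K) * Sc K m (pseq (pp_path b0)) s c | inr _ => 0 end.
Proof. by rewrite /Tt glb_x; case: (pp_x b0). Qed.

End Gl2.

Lemma pp_par (Q : quiver) m (b : ppair Q m) :
  psrc (pp_path b) = xsrc (pp_x b) /\ ptgt (pp_path b) = xtgt (pp_x b).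
Proof. by case/andP: (valP b) => /eqP -> /eqP ->. Qed.

Lemma pseq_cons (Q : quiver) m (p : qpath Q m) : (0 < m)%N ->
  exists a s, pseq p = a :: s.
Proof.
move=> m0; case E: (pseq p) (psize p) => [|a s] /=; last by exists a, s.
by move=> E0; rewrite -E0 in m0.
Qed.

Section Gl3.
Variables (Q : quiver) (e1 em : qV Q) (K : fieldType).
Hypothesis Hsrc : is_source e1.
Hypothesis Hsnk : is_sink em.
Local Notation B := (glued_quiver e1 em).
Local Notation gl := (glue e1 em).
Local Notation glb := (@glb Q e1 em _).

Lemma glb_lift m (b' : ppair B m) (v : qV Q) (x : qV Q + qE Q) :
  walk v (pseq (pp_path b')) -> glue_x e1 em x = pp_x b' -> gl v = psrc (pp_path b') ->
  v == xsrc x -> last v (map (@qt Q) (pseq (pp_path b'))) == xtgt x ->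
  exists b, glb b = b'.
Proof.
move=> W Ex Ev H1 H2.
pose p : qpath Q m := exist _ (v, (val (pp_path b')).2) W.
have Hb : (psrc p == xsrc x) && (ptgt p == xtgt x) by rewrite /= H1 H2.
exists (exist _ (p, x) Hb); apply/eqP; rewrite -psi_cond /=.
by rewrite Ev Ex !eqxx.
Qed.

Lemma surj1 m (b0 : ppair Q m) e0 (b' : ppair B m.+1) (c : qE Q) : (0 < m)%N ->
  pp_x b0 = inl e0 -> pp_x b' = inr c ->
  Sc K m (pseq (pp_path b0)) (pseq (pp_path b')) c != 0 -> exists b, glb b = b'.
Proof.
move=> m0 E0 E' /Sc_neq0 /orP H.
have [S0 T0] := pp_par b0; rewrite E0 /= in S0 T0.
have [S' T'] := pp_par b'; rewrite E' /= in S' T'.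
have W0 := pwalk (pp_path b0); have W' := pwalk (pp_path b').
have [a [s Es0]] := pseq_cons (pp_path b0) m0.
have Ha : qs a = e0 by rewrite -S0; move: W0; rewrite Es0 => /walk_head.
have Hl : last e0 (map (@qt Q) (pseq (pp_path b0))) = e0 by rewrite -{1}S0.
case: H => /eqP Es.
- have Hc : qs c = e0.
    apply: (glue_inj_nem (e1:=e1) (Hsnk c)); first by rewrite -Ha Hsnk.
    move: W'; rewrite Es walk_rcons => /andP [W1 /eqP HH].
    change (gl (@qs Q c) = last (psrc (pp_path b')) (map (@qt B) (pseq (pp_path b0)))) in HH.
    rewrite HH.
    have -> : psrc (pp_path b') = gl e0.
      by move: W1; rewrite Es0 => /walk_head <-; rewrite /= Ha.
    by rewrite last_glue Hl.
  apply: (glb_lift (v:=e0) (x:=inr c)) => //=.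
  + by rewrite Es walk_rcons -{1}S0 W0 Hl Hc eqxx.
  + by rewrite S' Hc.
  + by rewrite Hc.
  + by rewrite Es map_rcons last_rcons.
- have Hc : qt c = e0.
    apply: (glue_inj_ne1 (e1:=e1) (em:=em) (Hsrc c)).
      by rewrite -Hl Es0 /= last_map Hsrc.
    move: W'; rewrite Es Es0 /= => /andP [_ /andP [/eqP <- _]].
    by rewrite Ha.
  apply: (glb_lift (v:=qs c) (x:=inr c)) => //=.
  + by rewrite Es /= eqxx Hc -S0.
  + by rewrite Es /= Hc Hl.
Qed.

Lemma surj2 m (b'' : ppair B m) e'' (b : ppair Q m.+1) c : (0 < m)%N ->
  pp_x b'' = inl e'' -> pp_x b = inr c ->
  Sc K m (pseq (pp_path b'')) (pseq (pp_path b)) c != 0 -> exists b0, glb b0 = b''.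
Proof.
move=> m0 E'' E /Sc_neq0 /orP H.
have [S'' T''] := pp_par b''; rewrite E'' /= in S'' T''.
have [S T] := pp_par b; rewrite E /= in S T.
have W'' := pwalk (pp_path b''); have W := pwalk (pp_path b).
have [a [s Es'']] : exists (a : qE Q) (s : seq (qE Q)), pseq (pp_path b'') = a :: s
  := pseq_cons (pp_path b'') m0.
have Ha : gl (qs a) = psrc (pp_path b'') by move: W''; rewrite Es'' => /walk_head.
suff [Wa La] : walk (qs a) (pseq (pp_path b'')) /\
               last (qs a) (map (@qt Q) (pseq (pp_path b''))) = qs a.
  apply: (glb_lift (v:=qs a) (x:=inl (qs a))) => //=.
  + by rewrite E'' Ha S''.
  + by rewrite La.
case: H => /eqP Es.
- move: W; rewrite Es walk_rcons => /andP [W1 /eqP Hc].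
  have Hs : psrc (pp_path b) = qs a by move: W1; rewrite Es'' => /walk_head.
  rewrite Hs in W1 Hc; split => //; rewrite -Hc.
  apply: (glue_inj_nem (e1:=e1) (Hsnk c) (Hsnk a)).
  by rewrite Hc -last_glue Ha -/(ptgt (pp_path b'')) T'' S''.
- move: W T; rewrite /ptgt Es Es'' /= => /andP [_ /andP [/eqP Hac W1]] Hl.
  by rewrite Hac eqxx W1 Hl.
Qed.

End Gl3.

Section Gl4.
Variables (Q : quiver) (e1 em : qV Q) (K : fieldType).
Hypothesis Hsrc : is_source e1.
Hypothesis Hsnk : is_sink em.
Local Notation B := (glued_quiver e1 em).
Local Notation gl := (glue e1 em).
Local Notation glb := (@glb Q e1 em _).

Lemma psi_delta m (f : cochain Q K m) : (0 < m)%N ->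
  psi e1 em (cdelta f) = cdelta (psi e1 em f).
Proof.
move=> m0; apply/ffunP => b'.
have Hs : forall s c, \sum_b' Tt (psi e1 em f) b' s c = \sum_b Tt f b s c.
  move=> s c; rewrite (sum_glb m0).
    by apply: eq_bigr => b _; rewrite Tt_glb psi_glb.
  by move=> b'' Hn; rewrite /Tt psi_nopre // mul0r; case: (pp_x b'').
case: (pickP (fun b => glb b == b')) => [b1 /eqP Hb1 | Hn].
  rewrite -Hb1 psi_glb //.
  rewrite !cdeltaE // glb_x; case: (pp_x b1) => //= c.

rewrite psi_nopre; last by move=> b; rewrite Hn.
rewrite cdeltaE //; case E': (pp_x b') => [//|c].
rewrite Hs; apply/esym/big1 => b0 _; rewrite /Tt; case E0: (pp_x b0) => [e0|//].
apply/eqP; rewrite mulf_eq0; apply/orP; right; apply/negPn/negP => H.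
have [b1 Hb1] := surj1 Hsrc Hsnk m0 E0 E' H.
by move: (Hn b1); rewrite Hb1 eqxx.
Qed.

Lemma phi_delta m (g : cochain B K m) : (0 < m)%N ->
  phi (cdelta g) = cdelta (phi g).
Proof.
move=> m0; apply/ffunP => b; rewrite ffunE !cdeltaE // glb_x.
case E: (pp_x b) => [//|c] /=.
rewrite (sum_glb m0).
  by apply: eq_bigr => b0 _; rewrite Tt_glb /Tt ffunE.
move=> b'' Hn; rewrite /Tt; case E'': (pp_x b'') => [e''|//].
apply/eqP; rewrite mulf_eq0; apply/orP; right; apply/negPn/negP => H.
have [b1 Hb1] := surj2 Hsnk m0 E'' E H.
by move: (Hn b1); rewrite Hb1 eqxx.
Qed.

End Gl4.

Lemma psi_lin (Q : quiver) (e1 em : qV Q) (K : fieldType) m :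
  linear (@psi Q e1 em K m).
Proof.
move=> a u v; apply/ffunP => b'; rewrite !ffunE scaler_sumr -big_split.
by apply: eq_bigr => b _; rewrite !ffunE.
Qed.

HB.instance Definition _ (Q : quiver) (e1 em : qV Q) (K : fieldType) m :=
  GRing.isLinear.Build K (cochain Q K m) (cochain (glued_quiver e1 em) K m) _
    (@psi Q e1 em K m) (@psi_lin Q e1 em K m).

Lemma hh_ineq (K : fieldType) (VA VB : vectType K) (ZA IA : {vspace VA})
  (ZB IB : {vspace VB}) (f : 'Hom(VA, VB)) (g : VB -> VA) :
  (forall x, g (f x) = x) -> (f @: ZA <= ZB)%VS -> (IB <= ZB)%VS ->
  (forall y, y \in IB -> g y \in IA) ->
  (\dim ZA - \dim IA <= \dim ZB - \dim IB)%N.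
Proof.
move=> gf sZ sI gI.
have k0 : lker f = 0%VS by apply/eqP/lker0P => x y E; rewrite -[x]gf E gf.
have dZ : \dim (f @: ZA) = \dim ZA by rewrite limg_dim_eq // k0 capv0.
have dI : \dim (f @: IA) = \dim IA by rewrite limg_dim_eq // k0 capv0.
have s1 : (f @: ZA :&: IB <= f @: IA)%VS.
  apply/subvP => y /memv_capP [/memv_imgP [x _ ->] Hy].
  by rewrite -[x]gf; apply: memv_img; rewrite gf; rewrite -[x]gf; apply: gI.
have s2 : (f @: ZA + IB <= ZB)%VS by rewrite subv_add sZ sI.
have := dimv_sum_cap (f @: ZA) IB; have := dimvS s1; have := dimvS s2.
rewrite dZ dI; lia.
Qed.
End Helpers.
Import Helpers.
Unset Implicit Arguments. Set Strict Implicit.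

Theorem proposition6p11 (K : fieldType) (Q : quiver) (e1 em : qV Q) :
  connected_quiver Q ->
  is_source e1 -> non_isolated e1 ->
  is_sink em -> non_isolated em ->
  forall n : nat, (2 <= n)%N ->
  [/\ (forall f, f \in kerd Q K n ->
         psi e1 em f \in kerd (glued_quiver e1 em) K n),
      {in kerd Q K n &, injective (@psi Q e1 em K n)},
      (forall f, f \in imd Q K n ->
         psi e1 em f \in imd (glued_quiver e1 em) K n)
    & (HHdim Q K n <= HHdim (glued_quiver e1 em) K n)%N].
Proof.
move=> _ Hsrc _ Hsnk _ [|[|m]] // _.
have m0 : (0 < m.+1)%N by [].
have Hker : forall f, f \in kerd Q K m.+2 ->
         psi e1 em f \in kerd (glued_quiver e1 em) K m.+2.
  move=> f; rewrite /kerd !memv_ker !lfunE /= -psi_delta //.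
  by move/eqP->; rewrite GRing.linear0.
have Hinj : injective (@psi Q e1 em K m.+2).
  by move=> f g E; rewrite -(phi_psi e1 em f) // E phi_psi.
split => //.
- by move=> f g _ _; apply: Hinj.
- move=> f /memv_imgP [g _ ->]; rewrite lfunE /= (psi_delta Hsrc Hsnk) //.
  rewrite /imd; apply/memv_imgP; exists (psi e1 em g); [exact: memvf | exact/esym/(lfunE (GRing.Linear.clone _ _ _ _ (@cdelta _ K _) _))].
rewrite /HHdim; apply: (@hh_ineq _ _ _ _ _ _ _ (linfun (@psi Q e1 em K m.+2)) (@phi Q e1 em K m.+2)).
- by move=> x; rewrite lfunE phi_psi.
- by apply/subvP => y /memv_imgP [x Hx ->]; rewrite lfunE; apply: Hker.
- apply/subvP => y /memv_imgP [x _ ->].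
  by rewrite /kerd memv_ker !lfunE /= cdelta2.
- move=> y /memv_imgP [x _ ->]; rewrite lfunE /= phi_delta //.
  by rewrite /imd; apply/memv_imgP; exists (phi x); [exact: memvf | by rewrite lfunE].
Qed.
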